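(* Let $(E\to M,\rho,\langle\cdot,\cdot\rangle,[\cdot,\cdot])$ be a Courant algebroid, $\mathcal{G}$ a generalized metric on $E$ and $D$ a generalized connection on $E$ compatible with $\mathcal{G}$ (i.e. $D\mathcal{G}=0$). Then the total generalized Ricci curvature satisfies $\mathrm{Ric}=\mathrm{Ric}^+_{\mathrm{GF}}+\mathrm{Ric}^-_{\mathrm{GF}}$, i.e. for all $a,b\in\Gamma(E)$, \[\mathrm{Ric}(a,b)=\mathrm{Ric}^+_{\mathrm{GF}}(a_-,b_+)+\mathrm{Ric}^-_{\mathrm{GF}}(a_+,b_-).\]
   Context: A Courant algebroid $(E\to M,\rho,\langle\cdot,\cdot\rangle,[\cdot,\cdot])$ consists of a vector bundle $E$, a nondegenerate symmetric bilinear form, an anchor $\rho:E\to TM$ and a bracket on $\Gamma(E)$ with $[a,[b,c]]=[[a,b],c]+[b,[a,c]]$, $\mathcal{L}_{\rho a}\langle b,c\rangle=\langle[a,b],c\rangle+\langle b,[a,c]\rangle$, $2[a,a]=\rho^*d\langle a,a\rangle$. A generalized connection is a linear $D:\Gamma(E)\to\Gamma(E^*\otimes E)$ with $D(fa)=fDa+\rho^*df\otimes a$ and $\rho^*d\langle a,b\rangle=\langle Da,b\rangle+\langle a,Db\rangle$; $D_ba:=(Da)(b)$. Naive curvature: $\mathcal{R}_0(a,b)c:=D_aD_bc-D_bD_ac-D_{[a,b]}c$. A generalized metric is a self-adjoint $\mathcal{G}\in\operatorname{End}E$ with $\mathcal{G}^2=1$; $V_\pm=\ker(\mathcal{G}\mp1)$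 and $x_\pm:=\tfrac12(1\pm\mathcal{G})x$. $D$ compatible with $\mathcal{G}$ means $D$ preserves $\Gamma(V_\pm)$. The total curvature is $\mathcal{R}(a,b):=\mathcal{R}_0(a_+,b_-)+\mathcal{R}_0(a_-,b_+)\in\operatorname{End}E$, and the total generalized Ricci curvature is $\mathrm{Ric}(a,b):=$ trace of the endomorphism $c\mapsto\mathcal{R}(c,a)b$ of $E$. For compatible $D$, $\mathrm{Ric}^\pm_{\mathrm{GF}}(a_\mp,b_\pm)$ is the trace of the endomorphism $V_\pm\to V_\pm$, $c_\pm\mapsto\mathcal{R}_0(c_\pm,a_\mp)b_\pm$. *)

(* Defs.v *)
(* Courant algebroids are modelled algebraically through their
   module of sections: A plays the role of C^oo(M) (a commutative R-algebra,
   R the reals), V the role of Gamma(E) (an A-module). *)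
From HB Require Import structures.
From mathcomp Require Import all_boot all_order all_algebra.
From mathcomp Require Import reals.
Set Implicit Arguments. Unset Strict Implicit. Unset Printing Implicit Defensive.
Import Order.TTheory GRing.Theory Num.Theory.
Local Open Scope ring_scope.

Section CourantDefs.
Variables (R : realType) (A : comAlgType R) (V : lmodType A).

(* rho a : the vector field rho(a), acting on functions as a derivation *)
Definition anchor_axioms (rho : V -> A -> A) : Prop :=
  [/\ forall a f g, rho a (f * g) = f * rho a g + g * rho a f,
      forall a (r : R) f g, rho a (r *: f + g) = r *: rho a f + rho a g
    & forall f a b g, rho (f *: a + b) g = f * rho a g + rho b g].

(* nondegenerate symmetric C^oo(M)-bilinear pairing on sections, inducing
   Gamma(E) ~= Gamma(E dual) *)
Definition pairing_axioms (pair : V -> V -> A) : Prop :=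
  [/\ forall a b, pair a b = pair b a,
      forall f a b c, pair (f *: a + b) c = f * pair a c + pair b c,
      forall a, (forall c, pair a c = 0) -> a = 0
    & forall phi : V -> A, (forall f x y, phi (f *: x + y) = f * phi x + phi y) ->
        exists a, forall c, pair a c = phi c].

(* rsd f = rho^* d f, identified with a section of E via the pairing *)
Definition rsd_axiom (rho : V -> A -> A) (pair : V -> V -> A) (rsd : A -> V) : Prop :=
  forall f c, pair (rsd f) c = rho c f.

Definition bracket_axioms (rho : V -> A -> A) (pair : V -> V -> A)
    (br : V -> V -> V) (rsd : A -> V) : Prop :=
  [/\
      (forall (r : R) a a' b, br ((r%:A : A) *: a + a') b = (r%:A : A) *: br a b + br a' b)
      /\ (forall (r : R) a b b', br a ((r%:A : A) *: b + b') = (r%:A : A) *: br a b + br a b'),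
      (forall a b c, br a (br b c) = br (br a b) c + br b (br a c)),
      (forall a b c, rho a (pair b c) = pair (br a b) c + pair b (br a c))
    & (forall a, br a a *+ 2 = rsd (pair a a))].

Definition courant_algebroid (rho : V -> A -> A) (pair : V -> V -> A)
    (br : V -> V -> V) (rsd : A -> V) : Prop :=
  [/\ anchor_axioms rho, pairing_axioms pair, rsd_axiom rho pair rsd
    & bracket_axioms rho pair br rsd].

Definition generalized_metric (pair : V -> V -> A) (G : V -> V) : Prop :=
  [/\ forall f x y, G (f *: x + y) = f *: G x + G y,
      forall a b, pair (G a) b = pair a (G b)
    & forall a, G (G a) = a].

Definition Vplus (G : V -> V) (x : V) : Prop := G x = x.
Definition Vminus (G : V -> V) (x : V) : Prop := G x = - x.

Definition pplus (G : V -> V) (x : V) : V := ((2^-1 : R)%:A : A) *: (x + G x).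
Definition pminus (G : V -> V) (x : V) : V := ((2^-1 : R)%:A : A) *: (x - G x).

(* generalized connection, written  D b a = D_b a = (D a)(b) *)
Definition generalized_connection (rho : V -> A -> A) (pair : V -> V -> A)
    (D : V -> V -> V) : Prop :=
  [/\ forall f b c a, D (f *: b + c) a = f *: D b a + D c a,
      forall b a a', D b (a + a') = D b a + D b a',
      forall b f a, D b (f *: a) = f *: D b a + rho b f *: a
    & forall c a b, rho c (pair a b) = pair (D c a) b + pair a (D c b)].

Definition compatible (G : V -> V) (D : V -> V -> V) : Prop :=
  (forall b x, Vplus G x -> Vplus G (D b x)) /\
  (forall b x, Vminus G x -> Vminus G (D b x)).

Definition naive_curv (br : V -> V -> V) (D : V -> V -> V) (a b c : V) : V :=
  D a (D b c) - D b (D a c) - D (br a b) c.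

Definition total_curv (br : V -> V -> V) (D : V -> V -> V) (G : V -> V) (a b c : V) : V :=
  naive_curv br D (pplus G a) (pminus G b) c + naive_curv br D (pminus G a) (pplus G b) c.

(* finite dual basis (e_i, phi_i) of the module of sections of a subbundle S
   (S = E, V_+ or V_-): phi_i are C^oo(M)-linear on S and x = sum_i phi_i(x) e_i *)
Definition dual_basis (S : V -> Prop) (n : nat) (e : 'I_n -> V) (phi : 'I_n -> V -> A) : Prop :=
  [/\ forall i, S (e i),
      forall i f x y, S x -> S y -> phi i (f *: x + y) = f * phi i x + phi i y
    & forall x, S x -> x = \sum_(i < n) phi i x *: e i].

Definition dtrace (n : nat) (e : 'I_n -> V) (phi : 'I_n -> V -> A) (g : V -> V) : A :=
  \sum_(i < n) phi i (g (e i)).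

Definition Ric (br : V -> V -> V) (D : V -> V -> V) (G : V -> V)
    (n : nat) (e : 'I_n -> V) (phi : 'I_n -> V -> A) (a b : V) : A :=
  dtrace e phi (fun c => total_curv br D G c a b).

(* Ric^+_GF(a_-, b_+) = tr_{V_+} (c_+ |-> R_0(c_+, a_-) b_+) ; am in V_-, bp in V_+ *)
Definition RicGF_plus (br : V -> V -> V) (D : V -> V -> V)
    (n : nat) (e : 'I_n -> V) (phi : 'I_n -> V -> A) (am bp : V) : A :=
  dtrace e phi (fun c => naive_curv br D c am bp).

(* Ric^-_GF(a_+, b_-) = tr_{V_-} (c_- |-> R_0(c_-, a_+) b_-) ; ap in V_+, bm in V_- *)
Definition RicGF_minus (br : V -> V -> V) (D : V -> V -> V)
    (n : nat) (e : 'I_n -> V) (phi : 'I_n -> V -> A) (ap bm : V) : A :=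
  dtrace e phi (fun c => naive_curv br D c ap bm).

End CourantDefs.

(* Main.v *)
Require Import Defs.
From HB Require Import structures.
From mathcomp Require Import all_boot all_order all_algebra.
From mathcomp Require Import reals.
From mathcomp Require Import ring lra.
Import Order.TTheory GRing.Theory Num.Theory.
Local Open Scope ring_scope.
Set Implicit Arguments. Unset Strict Implicit.
Lemma Z2 (U : zmodType) (a1 b1 a2 c b2 a3 b3 : U) :
  a1 + b1 - (a2 + c + b2) - (a3 + (-c + b3)) = a1 - a2 - a3 + (b1 - b2 - b3).
Proof.
rewrite !opprD !opprK !addrA.
rewrite (ACl ((((((1*3)*6)*2)*5)*8)*(4*7))) /= addNr addr0.
by [].
Qed.
Lemma Z3 (U : zmodType) (a1 a2 b1 b2 c1 c2 : U) :
  (a1 + a2) - (b1 + b2) - (c1 + c2) = (a1 - b1 - c1) + (a2 - b2 - c2).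
Proof.
rewrite !opprD !addrA.
by rewrite (ACl (((((1*3)*5)*2)*4)*6)) /= ?addrA.
Qed.
Lemma Z4 (U : zmodType) (u g d v : U) :
  u + g = d + v -> u - g = -(d - v) -> u + u = v + v.
Proof.
move=> h1 h2.
have : (u + g) + (u - g) = (d + v) + (-(d - v)) by rewrite h1 h2.
rewrite opprB addrACA.
rewrite (subrr g) addr0 => ->.
by rewrite addrC addrA subrK.
Qed.
Lemma Z1 (U : zmodType) (x y z w p : U) :
  x+y+(z+w) + (x+y+(z+w)) = x+x+p+(p+(w+w)) -> y+z+(y+z) = p+p.
Proof.
move=> h; apply: (addrI (x+x)); apply: (addIr (w+w)).
by rewrite (AC ((2*(2*2))*2) (((1*3)*(4*7))*((2*5)*(6*8)))) /= h !addrA.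
Qed.
Section S.
Variables (R : realType) (A : comAlgType R) (V : lmodType A).

Lemma hh : (2^-1 : R) + 2^-1 = 1.
Proof. lra. Qed.
Lemma half_double (v : V) : ((2^-1 : R)%:A : A) *: (v + v) = v.
Proof. by rewrite scalerDr -scalerDl -scalerDl hh scale1r scale1r. Qed.
Lemma cancel2A (x : A) : x + x = 0 -> x = 0.
Proof. by move=> h; rewrite -[x]scale1r -hh scalerDl -scalerDr h scaler0. Qed.
Lemma cancel2V (u v : V) : u + u = v + v -> u = v.
Proof. by move=> h; rewrite -[u]half_double h half_double. Qed.

Lemma sum_lin_A (S : V -> Prop) (phi : V -> A) (I : Type) (r : seq I) (g : I -> A) (x : I -> V) :
  S 0 -> (forall f x y, S x -> S y -> S (f*:x+y)) ->
  (forall f x y, S x -> S y -> phi (f*:x+y) = f * phi x + phi y) -> (forall i, S (x i)) ->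
  S (\sum_(i <- r) g i *: x i) /\ phi (\sum_(i <- r) g i *: x i) = \sum_(i <- r) g i * phi (x i).
Proof.
move=> S0 Sl phil Sx.
have phi0 : phi 0 = 0.
  have := phil 1 0 0 S0 S0; rewrite scale1r addr0 mul1r => h.
  by apply: (addrI (phi 0)); rewrite addr0 -h.
apply: (big_rec2 (fun y1 y2 => S y1 /\ phi y1 = y2)) => [|i y1 y2 _ [Sy <-]]; first by [].
by split; [apply: Sl | rewrite phil].
Qed.

Lemma sum_lin_V (S : V -> Prop) (phi : V -> V) (I : Type) (r : seq I) (g : I -> A) (x : I -> V) :
  S 0 -> (forall f x y, S x -> S y -> S (f*:x+y)) ->
  (forall f x y, S x -> S y -> phi (f*:x+y) = f *: phi x + phi y) -> (forall i, S (x i)) ->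
  S (\sum_(i <- r) g i *: x i) /\ phi (\sum_(i <- r) g i *: x i) = \sum_(i <- r) g i *: phi (x i).
Proof.
move=> S0 Sl phil Sx.
have phi0 : phi 0 = 0.
  have := phil 1 0 0 S0 S0; rewrite !scale1r addr0 => h.
  by apply: (addrI (phi 0)); rewrite addr0 -h.
apply: (big_rec2 (fun y1 y2 => S y1 /\ phi y1 = y2)) => [|i y1 y2 _ [Sy <-]]; first by [].
by split; [apply: Sl | rewrite phil].
Qed.

Lemma trace_restrict (S : V -> Prop) (S0 : S 0)
  (Sl : forall f x y, S x -> S y -> S (f*:x+y)) (P N : V -> V)
  (Plin : forall f x y, P (f*:x+y) = f*:P x + P y) (PS : forall x, S (P x))
  (Nlin : forall f x y, S x -> S y -> N (f*:x+y) = f*:N x + N y)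
  n e phi (he : dual_basis (fun _ => True) e phi) ns es phs (hes : dual_basis S es phs) :
  \sum_(i < n) phi i (N (P (e i))) = \sum_(j < ns) phs j (P (N (es j))).
Proof.
case: he => _ phil hex; case: hes => esS phsl hesx.
transitivity (\sum_(i < n) \sum_(j < ns) phs j (P (e i)) * phi i (N (es j))).
  apply: eq_bigr => i _.
  rewrite {1}(hesx (P (e i)) (PS _)).
  have [_ ->] := sum_lin_V (index_enum 'I_ns) (phs^~ (P (e i))) S0 Sl Nlin esS.
  have [_ ->] := sum_lin_A (S := fun _ => True) (phi := phi i) (index_enum 'I_ns) (phs^~ (P (e i)))
     (x := fun j => N (es j)) I (fun _ _ _ _ _ => I) (phil i) (fun _ => I).
  by [].
rewrite exchange_big; apply: eq_bigr => j _.
rewrite {2}(hex (N (es j)) I).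
have [_ ->] := sum_lin_V (S := fun _ => True) (phi := P) (index_enum 'I_n) (fun i => phi i (N (es j))) (x := e)
   I (fun _ _ _ _ _ => I) (fun f x y _ _ => Plin f x y) (fun _ => I).
have [_ ->] := sum_lin_A (index_enum 'I_n) (fun i => phi i (N (es j))) (x := fun i => P (e i)) S0 Sl (phsl j) (fun i => PS _).
by apply: eq_bigr => i _; rewrite mulrC.
Qed.

Variables (rho : V -> A -> A) (pair : V -> V -> A) (br : V -> V -> V) (rsd : A -> V)
    (G : V -> V) (D : V -> V -> V).
Hypotheses (hC : courant_algebroid rho pair br rsd) (hG : generalized_metric pair G)
    (hD : generalized_connection rho pair D) (hDG : compatible G D).

Let hA : anchor_axioms rho. Proof. by case: hC. Qed.
Let hP : pairing_axioms pair. Proof. by case: hC. Qed.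
Let hR : rsd_axiom rho pair rsd. Proof. by case: hC. Qed.
Let hB : bracket_axioms rho pair br rsd. Proof. by case: hC. Qed.
Lemma rhoD a f g : rho a (f + g) = rho a f + rho a g.
Proof. by case: hA => _ h _; have := h a 1 f g; rewrite !scale1r. Qed.
Lemma rhoM a f g : rho a (f * g) = f * rho a g + g * rho a f.
Proof. by case: hA => h _ _. Qed.
Lemma pairC a b : pair a b = pair b a.
Proof. by case: hP => h _ _ _. Qed.
Lemma pairL f a b c : pair (f *: a + b) c = f * pair a c + pair b c.
Proof. by case: hP => _ h _ _. Qed.
Lemma pairDl a b c : pair (a + b) c = pair a c + pair b c.
Proof. by have := pairL 1 a b c; rewrite scale1r mul1r. Qed.
Lemma pairZl f a c : pair (f *: a) c = f * pair a c.
Proof.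
have h0 : pair 0 c = 0.
  have := pairDl 0 0 c; rewrite addr0 => h.
  by apply: (addrI (pair 0 c)); rewrite addr0 -h.
by rewrite -[f *: a]addr0 pairL h0 addr0.
Qed.
Lemma pair0l c : pair 0 c = 0.
Proof. by rewrite -(scale0r 0) pairZl mul0r. Qed.
Lemma pairNl a c : pair (- a) c = - pair a c.
Proof. by rewrite -scaleN1r pairZl mulN1r. Qed.
Lemma pairBl a b c : pair (a - b) c = pair a c - pair b c.
Proof. by rewrite pairDl pairNl. Qed.
Lemma pairDr a b c : pair c (a + b) = pair c a + pair c b.
Proof. by rewrite !(pairC c) pairDl. Qed.
Lemma pairZr f a c : pair c (f *: a) = f * pair c a.
Proof. by rewrite !(pairC c) pairZl. Qed.
Lemma nondeg a : (forall c, pair a c = 0) -> a = 0.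
Proof. by case: hP => _ _ h _; apply: h. Qed.
Lemma eq_pair u v : (forall c, pair u c = pair v c) -> u = v.
Proof.
move=> h; apply/eqP; rewrite -subr_eq0; apply/eqP; apply: nondeg => c.
by rewrite pairBl h subrr.
Qed.
Lemma rsdP f c : pair (rsd f) c = rho c f.
Proof. exact: hR. Qed.
Lemma rsdD f g : rsd (f + g) = rsd f + rsd g.
Proof. by apply: eq_pair => c; rewrite pairDl !rsdP rhoD. Qed.
Lemma rsd0 : rsd 0 = 0.
Proof.
have := rsdD 0 0; rewrite addr0 => h.
by apply: (addrI (rsd 0)); rewrite addr0 -h.
Qed.
Lemma brDl a a' b : br (a + a') b = br a b + br a' b.
Proof. by case: hB => -[h _] _ _ _; have := h 1 a a' b; rewrite scale1r !scale1r. Qed.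
Lemma brDr a b b' : br a (b + b') = br a b + br a b'.
Proof. by case: hB => -[_ h] _ _ _; have := h 1 a b b'; rewrite scale1r !scale1r. Qed.
Lemma br_inv a b c : rho a (pair b c) = pair (br a b) c + pair b (br a c).
Proof. by case: hB => _ _ h _. Qed.
Lemma br_sq a : br a a *+ 2 = rsd (pair a a).
Proof. by case: hB => _ _ _ h. Qed.
Lemma brZr a f b : br a (f *: b) = f *: br a b + rho a f *: b.
Proof.
apply: eq_pair => c.
have := br_inv a (f *: b) c; rewrite pairZl rhoM br_inv => h.
rewrite pairZl in h. idtac.
rewrite pairDl !pairZl.
apply: (addIr (f * pair b (br a c))).
rewrite -h; ring.
Qed.
Lemma br_symm a b : br a b + br b a = rsd (pair a b).
Proof.
have := br_sq (a + b).
rewrite !brDl !brDr !pairDl !pairDr !rsdD -br_sq -(br_sq b) (pairC b a).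
rewrite !mulr2n => h; apply: cancel2V; exact: Z1 h.
Qed.
Lemma brC u v : br u v = rsd (pair u v) - br v u.
Proof. by rewrite -(br_symm u v) addrK. Qed.
Lemma brZl_orth f x z : pair x z = 0 -> br (f *: x) z = f *: br x z - rho z f *: x.
Proof.
move=> hxz; rewrite brC pairZl hxz mulr0 rsd0 brZr brC pairC hxz rsd0.
by rewrite !sub0r scalerN opprD opprK.
Qed.

Lemma DL f b c a : D (f *: b + c) a = f *: D b a + D c a.
Proof. by case: hD => h _ _ _. Qed.
Lemma DDl b c a : D (b + c) a = D b a + D c a.
Proof. by have := DL 1 b c a; rewrite !scale1r. Qed.
Lemma DDr b a a' : D b (a + a') = D b a + D b a'.
Proof. by case: hD => _ h _ _. Qed.
Lemma DZr b f a : D b (f *: a) = f *: D b a + rho b f *: a.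
Proof. by case: hD => _ _ h _. Qed.
Lemma D0r b : D b 0 = 0.
Proof.
have := DDr b 0 0; rewrite addr0 => h.
by apply: (addrI (D b 0)); rewrite addr0 -h.
Qed.
Lemma DNr b a : D b (- a) = - D b a.
Proof. by apply: (addrI (D b a)); rewrite -DDr !subrr D0r. Qed.
Lemma DBr b a a' : D b (a - a') = D b a - D b a'.
Proof. by rewrite DDr DNr. Qed.

Lemma GL f x y : G (f *: x + y) = f *: G x + G y.
Proof. by case: hG => h _ _. Qed.
Lemma GG x : G (G x) = x.
Proof. by case: hG => _ _ h. Qed.
Lemma Gsa a b : pair (G a) b = pair a (G b).
Proof. by case: hG => _ h _. Qed.
Lemma GD x y : G (x + y) = G x + G y.
Proof. by have := GL 1 x y; rewrite !scale1r. Qed.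
Lemma G0 : G 0 = 0.
Proof.
have := GD 0 0; rewrite addr0 => h.
by apply: (addrI (G 0)); rewrite addr0 -h.
Qed.
Lemma GZ f x : G (f *: x) = f *: G x.
Proof. by have := GL f x 0; rewrite !addr0 G0 addr0. Qed.
Lemma GN x : G (- x) = - G x.
Proof. by apply: (addrI (G x)); rewrite -GD !subrr G0. Qed.
Lemma GB x y : G (x - y) = G x - G y.
Proof. by rewrite GD GN. Qed.

Lemma Vplus0 : Vplus G 0. Proof. exact: G0. Qed.
Lemma Vminus0 : Vminus G 0. Proof. by rewrite /Vminus G0 oppr0. Qed.
Lemma VplusL f x y : Vplus G x -> Vplus G y -> Vplus G (f *: x + y).
Proof. by rewrite /Vplus GL => -> ->. Qed.
Lemma VminusL f x y : Vminus G x -> Vminus G y -> Vminus G (f *: x + y).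
Proof. by rewrite /Vminus GL => -> ->; rewrite scalerN opprD. Qed.
Lemma pplusV x : Vplus G (pplus G x).
Proof. by rewrite /Vplus /pplus GZ GD GG addrC. Qed.
Lemma pminusV x : Vminus G (pminus G x).
Proof. by rewrite /Vminus /pminus GZ GB GG -scalerN opprB. Qed.
Lemma hZ (h f : A) (u v : V) : h *: (f *: u + v) = f *: (h *: u) + h *: v.
Proof. by rewrite scalerDr !scalerA mulrC. Qed.
Lemma pplusL f x y : pplus G (f *: x + y) = f *: pplus G x + pplus G y.
Proof.
rewrite /pplus GL.
have -> : f *: x + y + (f *: G x + G y) = f *: (x + G x) + (y + G y) by rewrite scalerDr addrACA.
by rewrite hZ.
Qed.
Lemma pminusL f x y : pminus G (f *: x + y) = f *: pminus G x + pminus G y.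
Proof.
rewrite /pminus GL.
have -> : f *: x + y - (f *: G x + G y) = f *: (x - G x) + (y - G y) by rewrite scalerBr opprD addrACA.
by rewrite hZ.
Qed.
Lemma orth_pm x z : Vplus G x -> Vminus G z -> pair x z = 0.
Proof.
move=> hx hz; apply: cancel2A.
have h : pair x z = - pair x z by rewrite -{1}hx Gsa hz pairC pairNl pairC.
by rewrite {1}h addNr.
Qed.
Lemma orth_mp x z : Vminus G x -> Vplus G z -> pair x z = 0.
Proof. by move=> hx hz; rewrite pairC orth_pm. Qed.

Lemma DG x w : D x (G w) = G (D x w).
Proof.
case: hDG => hp hm.
have h1 := hp x (w + G w); rewrite /Vplus GD GG addrC DDr GD in h1.
have h2 := hm x (w - G w); rewrite /Vminus GB GG -opprB DBr GB in h2.
have := Z4 (h1 erefl) (h2 erefl) => h.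
by symmetry; apply: cancel2V.
Qed.

Definition R0 := naive_curv br D.
Lemma R0D x y w1 w2 : R0 x y (w1 + w2) = R0 x y w1 + R0 x y w2.
Proof. by rewrite /R0 /naive_curv !DDr Z3. Qed.
Lemma R00 x y : R0 x y 0 = 0.
Proof.
have := R0D x y 0 0; rewrite addr0 => h.
by apply: (addrI (R0 x y 0)); rewrite addr0 -h.
Qed.
Lemma R0N x y w : R0 x y (- w) = - R0 x y w.
Proof. by apply: (addrI (R0 x y w)); rewrite -R0D !subrr R00. Qed.
Lemma R0G x y w : R0 x y (G w) = G (R0 x y w).
Proof. by rewrite /R0 /naive_curv !DG !GB. Qed.
Lemma dhalf (s : V) : ((2^-1 : R)%:A : A) *: s + ((2^-1 : R)%:A : A) *: s = s.
Proof. by rewrite -scalerDr half_double. Qed.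
Lemma pplusR0 x y w : pplus G (R0 x y w) = R0 x y (pplus G w).
Proof.
rewrite /pplus -R0G -R0D.
by rewrite -{1}(dhalf (w + G w)) R0D half_double.
Qed.
Lemma pminusR0 x y w : pminus G (R0 x y w) = R0 x y (pminus G w).
Proof.
rewrite /pminus -R0G -R0N -R0D.
by rewrite -{1}(dhalf (w - G w)) R0D half_double.
Qed.
Lemma R0_tens f x y z w : pair x z = 0 ->
  R0 (f *: x + y) z w = f *: R0 x z w + R0 y z w.
Proof.
move=> hxz; rewrite /R0 /naive_curv !DL DDr DZr brDl brZl_orth //.
rewrite -scaleNr -[f *: br x z + _ + br y z]addrA !DL.
by rewrite !scalerBr scaleNr Z2.
Qed.



Lemma main_sec n (e : 'I_n -> V) phi (he : dual_basis (fun _ => True) e phi)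
  np (ep : 'I_np -> V) php (hep : dual_basis (Vplus G) ep php)
  nm (em : 'I_nm -> V) phm (hem : dual_basis (Vminus G) em phm) a b :
  Ric br D G e phi a b =
      RicGF_plus br D ep php (pminus G a) (pplus G b)
      + RicGF_minus br D em phm (pplus G a) (pminus G b).
Proof.
rewrite /Ric /dtrace /total_curv /RicGF_plus /RicGF_minus.
have phil : forall i x y, phi i (x + y) = phi i x + phi i y.
  by case: he => _ h _ i x y; have := h i 1 x y I I; rewrite scale1r mul1r.
rewrite (eq_bigr (fun i => phi i (R0 (pplus G (e i)) (pminus G a) b)
   + phi i (R0 (pminus G (e i)) (pplus G a) b))); last by move=> i _; rewrite phil.
rewrite big_split /=; congr (_ + _).
  have := trace_restrict Vplus0 VplusL pplusL pplusV
     (N := fun c => R0 c (pminus G a) b) _ he hep.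
  move=> /= ->; first by apply: eq_bigr => j _; rewrite pplusR0.
  by move=> f x y hx _; apply: R0_tens; apply: orth_pm => //; apply: pminusV.
have := trace_restrict Vminus0 VminusL pminusL pminusV
   (N := fun c => R0 c (pplus G a) b) _ he hem.
move=> /= ->; first by apply: eq_bigr => j _; rewrite pminusR0.
by move=> f x y hx _; apply: R0_tens; apply: orth_mp => //; apply: pplusV.
Qed.
End S.
Theorem lemma4p3 (R : realType) (A : comAlgType R) (V : lmodType A)
    (rho : V -> A -> A) (pair : V -> V -> A) (br : V -> V -> V) (rsd : A -> V)
    (G : V -> V) (D : V -> V -> V)
    (hC : courant_algebroid rho pair br rsd)
    (hG : generalized_metric pair G)
    (hD : generalized_connection rho pair D)
    (hDG : compatible G D)
    (n : nat) (e : 'I_n -> V) (phi : 'I_n -> V -> A)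
    (he : dual_basis (fun _ => True) e phi)
    (np : nat) (ep : 'I_np -> V) (php : 'I_np -> V -> A)
    (hep : dual_basis (Vplus G) ep php)
    (nm : nat) (em : 'I_nm -> V) (phm : 'I_nm -> V -> A)
    (hem : dual_basis (Vminus G) em phm) :
  forall a b : V,
    Ric br D G e phi a b =
      RicGF_plus br D ep php (pminus G a) (pplus G b)
      + RicGF_minus br D em phm (pplus G a) (pminus G b).
Proof. by move=> a b; apply: (@main_sec R A V rho pair br rsd G D hC hG hD hDG). Qed.
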